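(* Generalised Outer Multi-Objective RL (GOMORL), Occupancy Measure Orderings (OMO) and Trajectory Lottery Orderings (TLO) are equally expressive: for every environment $E$, $\mathrm{Ord}_{\mathrm{GOMORL}}(E)=\mathrm{Ord}_{\mathrm{OMO}}(E)=\mathrm{Ord}_{\mathrm{TLO}}(E)$.
   Context: An environment is a tuple $E=(\mathcal S,\mathcal A,\mathcal T,\mathcal I)$ where $\mathcal S,\mathcal A$ are finite nonempty sets, $\mathcal T:\mathcal S\times\mathcal A\to\Delta(\mathcal S)$ and $\mathcal I\in\Delta(\mathcal S)$. A policy is a map $\pi:\mathcal S\to\Delta(\mathcal A)$ (stationary, possibly stochastic); $\Pi^E$ denotes the set of all policies. A trajectory $\xi=(s_0,a_0,s_1,a_1,\dots)$ is generated under $\pi$ by $s_0\sim\mathcal I$, $a_t\sim\pi(s_t)$, $s_{t+1}\sim\mathcal T(s_t,a_t)$; $\mathbb E^\pi_\xi,\mathbb P^\pi$ denote expectation and probability under this distribution. An objective-specification formalism $X$ assigns to each environment $E$ a set of objective specifications, each inducing a total preorder $\succeq$ on $\Pi^E$; $\mathrm{Ord}_X(E)$ is the set of total preorders so induced. Occupancy measure: for $\gamma\in[0,1)$, $\vec m_\gamma(\pi)\in\mathbb R^{\mathcal S\times\mathcal A\times\mathcal S}$, $\vec m_\gamma(\pi)[s,a,s']=\sum_{t=0}^\infty\gamma^t\,\mathbb P^\pi[s_t=s,a_t=a,s_{t+1}=s']$, and $\vec m_\gamma(\Pi^E)=\{\vec m_\gamma(\pi):\pi\in\Pi^E\}$.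 Trajectory lottery: $L_{k,\pi}$ is the distribution of $(s_0,a_0,\dots,a_{k-1},s_k)$ under $\pi$, $L_\pi=(L_{0,\pi},L_{1,\pi},\dots)$, and $L_{\Pi^E}=\{L_\pi:\pi\in\Pi^E\}$. GOMORL: specification $(k,\mathcal R,\gamma,\succeq_J)$ with $k\in\mathbb N$, $\mathcal R:\mathcal S\times\mathcal A\times\mathcal S\to\mathbb R^k$ with components $\mathcal R_i$, $\gamma\in[0,1)$, $\succeq_J$ a total preorder on $\mathbb R^k$; with $\vec J(\pi)=(J_1(\pi),\dots,J_k(\pi))$, $J_i(\pi)=\mathbb E^\pi_\xi[\sum_{t=0}^\infty\gamma^t\mathcal R_i(s_t,a_t,s_{t+1})]$, it induces $\pi_1\succeq\pi_2\iff\vec J(\pi_1)\succeq_J\vec J(\pi_2)$. OMO: specification $(\gamma,\succeq_m)$ with $\gamma\in[0,1)$ and $\succeq_m$ a total preorder on $\vec m_\gamma(\Pi^E)$; it induces $\pi_1\succeq\pi_2\iff\vec m_\gamma(\pi_1)\succeq_m\vec m_\gamma(\pi_2)$. TLO: specification $(\succeq_L)$ with $\succeq_L$ a total preorder on $L_{\Pi^E}$; it induces $\pi_1\succeq\pi_2\iff L_{\pi_1}\succeq_L L_{\pi_2}$. *)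

(* Defs.v *)
From HB Require Import structures.
From mathcomp Require Import all_boot all_order all_algebra.
From mathcomp Require Import all_classical all_reals.
From mathcomp Require Import topology normedtype sequences.
Set Implicit Arguments. Unset Strict Implicit. Unset Printing Implicit Defensive.
Import Order.TTheory GRing.Theory Num.Theory numFieldNormedType.Exports.
Local Open Scope ring_scope.
Local Open Scope classical_set_scope.

Section Defs.
Variable R : realType.

Definition is_dist (X : finType) (f : X -> R) : Prop :=
  (forall x, 0 <= f x) /\ \sum_(x : X) f x = 1.

Record env (S A : finType) := Env {
  tr : S -> A -> S -> R;
  init : S -> R;
  tr_dist : forall s a, is_dist (tr s a);
  init_dist : is_dist init }.

Variables (S A : finType) (E : env S A).

Definition policy := { pi : S -> A -> R | forall s, is_dist (pi s) }.

(* Probability that the first k steps are (s_0,a_0,...,a_{k-1},s_k),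
   where ss i = s_i (i <= k) and aa i = a_i (i < k). *)
Definition traj_prob (pi : policy) (k : nat)
    (ss : {ffun 'I_k.+1 -> S}) (aa : {ffun 'I_k -> A}) : R :=
  init E (ss ord0) *
  \prod_(t < k) (sval pi (ss (widen_ord (leqnSn k) t)) (aa t) *
                 tr E (ss (widen_ord (leqnSn k) t)) (aa t) (ss (lift ord0 t))).

Definition step_prob (pi : policy) (t : nat) (s : S) (a : A) (s' : S) : R :=
  \sum_(ss : {ffun 'I_t.+2 -> S})
   \sum_(aa : {ffun 'I_t.+1 -> A}
          | [&& ss (inord t) == s, aa (inord t) == a & ss (inord t.+1) == s'])
     traj_prob pi ss aa.

Definition occupancy (g : R) (pi : policy) : S -> A -> S -> R :=
  fun s a s' => limn (series (fun t => g ^+ t * step_prob pi t s a s')).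

Definition lottery := forall k : nat, {ffun 'I_k.+1 -> S} -> {ffun 'I_k -> A} -> R.
Definition traj_lottery (pi : policy) : lottery := fun k ss aa => traj_prob pi ss aa.

(* J_i(pi) = E[sum_t g^t R_i(s_t,a_t,s_{t+1})], written (by linearity /
   dominated convergence for bounded rewards) as sum_t g^t E[R_i(...)]. *)
Definition Jret (g : R) (Rw : S -> A -> S -> R) (pi : policy) : R :=
  limn (series (fun t => g ^+ t * \sum_(s : S) \sum_(a : A) \sum_(s' : S)
                 step_prob pi t s a s' * Rw s a s')).

Definition Jvec (k : nat) (g : R) (Rw : S -> A -> S -> 'I_k -> R) (pi : policy)
  : 'I_k -> R := fun i => Jret g (fun s a s' => Rw s a s' i) pi.

Definition total_preorder_on (T : Type) (X : set T) (le : T -> T -> Prop) : Prop :=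
  (forall x y, X x -> X y -> le x y \/ le y x) /\
  (forall x y z, X x -> X y -> X z -> le x y -> le y z -> le x z).

Definition Ord_GOMORL : set (policy -> policy -> Prop) :=
  [set Rel | exists (k : nat) (Rw : S -> A -> S -> 'I_k -> R) (g : R)
               (leJ : ('I_k -> R) -> ('I_k -> R) -> Prop),
     0 <= g < 1 /\ total_preorder_on setT leJ /\
     forall p q, Rel p q <-> leJ (Jvec g Rw p) (Jvec g Rw q)].

Definition Ord_OMO : set (policy -> policy -> Prop) :=
  [set Rel | exists (g : R) (lem : (S -> A -> S -> R) -> (S -> A -> S -> R) -> Prop),
     0 <= g < 1 /\ total_preorder_on (range (occupancy g)) lem /\
     forall p q, Rel p q <-> lem (occupancy g p) (occupancy g q)].

Definition Ord_TLO : set (policy -> policy -> Prop) :=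
  [set Rel | exists (leL : lottery -> lottery -> Prop),
     total_preorder_on (range traj_lottery) leL /\
     forall p q, Rel p q <-> leL (traj_lottery p) (traj_lottery q)].

End Defs.

(* Main.v *)
Require Import Defs.
From HB Require Import structures.
From mathcomp Require Import all_boot all_order all_algebra.
From mathcomp Require Import all_classical all_reals.
From mathcomp Require Import topology normedtype sequences.
Set Implicit Arguments. Unset Strict Implicit. Unset Printing Implicit Defensive.
Import Order.TTheory GRing.Theory Num.Theory numFieldNormedType.Exports.
Local Open Scope ring_scope.

Definition snoc (T : Type) n (f : {ffun 'I_n -> T}) (x : T) : {ffun 'I_n.+1 -> T} :=
  [ffun i : 'I_n.+1 => if @insub _ (fun k => (k < n)%N) 'I_n (val i) is Some j then f j else x].
Definition finit (T : Type) n (f : {ffun 'I_n.+1 -> T}) : {ffun 'I_n -> T} :=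
  [ffun j => f (widen_ord (leqnSn n) j)].

Lemma snoc_val (T : Type) n (f : {ffun 'I_n -> T}) x (i : 'I_n.+1) (j : 'I_n) :
  val i = val j -> snoc f x i = f j.
Proof.
move=> ij; rewrite ffunE insubT; first by rewrite ij ltn_ord.
move=> H; congr (f _); exact: val_inj.
Qed.

Lemma snoc_max (T : Type) n (f : {ffun 'I_n -> T}) x (i : 'I_n.+1) :
  val i = n -> snoc f x i = x.
Proof. by move=> ij; rewrite ffunE insubF // ij ltnn. Qed.

Lemma finit_snoc (T : Type) n (f : {ffun 'I_n -> T}) x : finit (snoc f x) = f.
Proof. by apply/ffunP => j; rewrite ffunE (snoc_val _ _ (j := j)). Qed.

Lemma snoc_finit (T : Type) n (f : {ffun 'I_n.+1 -> T}) :
  snoc (finit f) (f ord_max) = f.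
Proof.
apply/ffunP => i; have [lt|ge] := ltnP (val i) n.
  rewrite (snoc_val _ _ (j := Ordinal lt)) // ffunE; congr (f _); exact: val_inj.
have ei : val i = n by apply/eqP; rewrite eqn_leq ge -ltnS ltn_ord.
rewrite snoc_max //; congr (f _); exact: val_inj.
Qed.

Lemma sum_snoc (R : nmodType) (T : finType) n (F : {ffun 'I_n.+1 -> T} -> R) :
  \sum_(f : {ffun 'I_n.+1 -> T}) F f =
  \sum_(g : {ffun 'I_n -> T}) \sum_(x : T) F (snoc g x).
Proof.
rewrite pair_bigA /=.
rewrite (reindex (fun p : {ffun 'I_n -> T} * T => snoc p.1 p.2)) //=.
exists (fun f => (finit f, f ord_max)) => [[g x] _|f _] /=.
  by rewrite finit_snoc snoc_max.
exact: snoc_finit.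
Qed.

Lemma sum_ifeq (R : nmodType) (T : finType) (y : T) (F : T -> R) :
  \sum_(x : T) (if x == y then F x else 0) = F y.
Proof. by rewrite -big_mkcond big_pred1_eq. Qed.

Lemma dist_le1 (R : realType) (X : finType) (f : X -> R) x : is_dist f -> 0 <= f x <= 1.
Proof.
move=> [f0 f1]; rewrite f0 /= -f1 (bigD1 x) //= lerDl sumr_ge0 //.
Qed.
Section Traj.
Variables (R : realType) (S A : finType) (E : env R S A).
Implicit Types (p q : policy R S A).

Lemma traj_snoc p k (ss : {ffun 'I_k.+1 -> S}) (aa : {ffun 'I_k -> A}) x b :
  traj_prob E p (snoc ss x) (snoc aa b) =
  traj_prob E p ss aa * (sval p (ss ord_max) b * tr E (ss ord_max) b x).
Proof.
rewrite /traj_prob big_ord_recr /= -mulrA. congr (_ * (_ * _)).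
- by congr (init E _); apply: snoc_val.
- apply: eq_bigr => t _.
  rewrite (snoc_val _ _ (j := widen_ord (leqnSn k) t)) //.
  rewrite (snoc_val _ _ (j := t)) //.
  by rewrite (snoc_val _ _ (j := lift ord0 t)) //= /bump /=.
- rewrite (snoc_val _ _ (j := ord_max)) // (snoc_max _ _ (i := ord_max)) //.
  by rewrite (snoc_max _ _ (i := lift ord0 ord_max)) //= /bump /=.
Qed.

Lemma traj_ge0 p k (ss : {ffun 'I_k.+1 -> S}) (aa : {ffun 'I_k -> A}) :
  0 <= traj_prob E p ss aa.
Proof.
rewrite /traj_prob mulr_ge0 //.
  by case: (init_dist E) => ->.
apply: prodr_ge0 => t _; apply: mulr_ge0.
  by case: (svalP p (ss (widen_ord (leqnSn k) t))) => ->.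
by case: (tr_dist E (ss (widen_ord (leqnSn k) t)) (aa t)) => ->.
Qed.

Lemma ffun0_eq (T : Type) (f g : {ffun 'I_0 -> T}) : f = g.
Proof. by apply/ffunP => -[]. Qed.

Lemma traj_tot p k :
  \sum_(ss : {ffun 'I_k.+1 -> S}) \sum_(aa : {ffun 'I_k -> A}) traj_prob E p ss aa = 1.
Proof.
elim: k => [|k IH].
  rewrite sum_snoc.
  pose g0 : {ffun 'I_0 -> S} := [ffun i : 'I_0 => False_rect _ (ltac:(by case: i))].
  rewrite (big_pred1 g0); last by move=> g; rewrite /= (ffun0_eq g g0) eqxx.
  rewrite -[RHS](proj2 (init_dist E)); apply: eq_bigr => x _.
  pose a0 : {ffun 'I_0 -> A} := [ffun i : 'I_0 => False_rect _ (ltac:(by case: i))].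
  rewrite (big_pred1 a0); last by move=> a; rewrite /= (ffun0_eq a a0) eqxx.
  by rewrite /traj_prob big_ord0 mulr1 (snoc_max _ _ (i := ord0)).
rewrite sum_snoc -[RHS]IH; apply: eq_bigr => ss _.
under eq_bigr do rewrite sum_snoc.
rewrite exchange_big /=; apply: eq_bigr => aa _.
under eq_bigr => i _ do under eq_bigr => b _ do rewrite traj_snoc.
rewrite exchange_big /= -[RHS]mulr1 -(proj2 (svalP p (ss ord_max))) mulr_sumr.
apply: eq_bigr => b _.
by rewrite -mulr_sumr -mulr_sumr (proj2 (tr_dist E _ _)) mulr1.
Qed.

Definition Qp p t (s : S) : R :=
  \sum_(ss : {ffun 'I_t.+1 -> S}) \sum_(aa : {ffun 'I_t -> A})
     (if ss ord_max == s then traj_prob E p ss aa else 0).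

Lemma Qp_bounds p t s : 0 <= Qp p t s <= 1.
Proof.
apply/andP; split.
  by apply: sumr_ge0 => ss _; apply: sumr_ge0 => aa _; case: ifP => // _; exact: traj_ge0.
rewrite -(traj_tot p t); apply: ler_sum => ss _; apply: ler_sum => aa _.
by case: ifP => // _; exact: traj_ge0.
Qed.

Lemma Qp_ge p k (ss : {ffun 'I_k.+1 -> S}) (aa : {ffun 'I_k -> A}) :
  traj_prob E p ss aa <= Qp p k (ss ord_max).
Proof.
rewrite /Qp (bigD1 ss) //= eqxx. rewrite (bigD1 aa) //= -addrA lerDl addr_ge0 //.
  by apply: sumr_ge0 => a _; exact: traj_ge0.
apply: sumr_ge0 => s' _; apply: sumr_ge0 => a _; case: ifP => // _; exact: traj_ge0.
Qed.

Lemma sum_if2 (T U : finType) (y : T) (c : U) (H : R) :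
  \sum_(x : T) \sum_(b : U) (if x == y then (if b == c then H else 0) else 0) = H.
Proof.
rewrite (bigD1 y) //= eqxx sum_ifeq.
rewrite [X in _ + X]big1 ?addr0 // => x xy.
by rewrite (negbTE xy) big1.
Qed.

Lemma step_probE p t s a s' :
  step_prob E p t s a s' = Qp p t s * (sval p s a * tr E s a s').
Proof.
rewrite /step_prob /Qp mulr_suml.
under eq_bigr => ss _ do rewrite big_mkcond.
rewrite sum_snoc; apply: eq_bigr => ss0 _.
under eq_bigr => x _ do rewrite sum_snoc.
have key : forall x (aa0 : {ffun 'I_t -> A}) b,
  (if [&& snoc ss0 x (inord t) == s, snoc aa0 b (inord t) == a & snoc ss0 x (inord t.+1) == s']
   then traj_prob E p (snoc ss0 x) (snoc aa0 b) else 0) =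
  (if x == s' then (if b == a then
     (if ss0 ord_max == s then traj_prob E p ss0 aa0 else 0) * (sval p s a * tr E s a s')
     else 0) else 0).
  move=> x aa0 b.
  rewrite (snoc_val _ _ (j := ord_max)); last by apply: inordK; rewrite ltnS leqnSn.
  rewrite (snoc_max _ _ (i := inord t)); last by apply: inordK.
  rewrite (snoc_max _ _ (i := inord t.+1)); last by apply: inordK.
  rewrite traj_snoc.
  case: (eqVneq x s') => [->|]; last by rewrite !andbF.
  case: (eqVneq b a) => [->|]; last by rewrite !andbF.
  by case: (eqVneq (ss0 ord_max) s) => [->|] //=; rewrite mul0r.
under eq_bigr do under eq_bigr do under eq_bigr do rewrite key.
rewrite exchange_big /= mulr_suml; apply: eq_bigr => aa0 _.
exact: sum_if2.
Qed.

Lemma step_bounds p t s a s' : 0 <= step_prob E p t s a s' <= 1.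
Proof.
rewrite step_probE.
have /andP[q0 q1] := Qp_bounds p t s.
have /andP[p0 p1] := dist_le1 a (svalP p s).
have /andP[t0 t1] := dist_le1 s' (tr_dist E s a).
apply/andP; split; first by rewrite !mulr_ge0.
rewrite -[1]mulr1 ler_pM //; first by rewrite mulr_ge0.
by rewrite -[1]mulr1 ler_pM.
Qed.

Lemma step_sum p t s a :
  \sum_(s' : S) step_prob E p t s a s' = Qp p t s * sval p s a.
Proof.
under eq_bigr do rewrite step_probE mulrA.
by rewrite -mulr_sumr (proj2 (tr_dist E s a)) mulr1.
Qed.

End Traj.

Section Ana.
Variable R : realType.

Lemma cvg_gu (g : R) (u : nat -> R) : 0 <= g < 1 -> (forall t, 0 <= u t <= 1) ->
  cvgn (series (fun t => g ^+ t * u t)).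
Proof.
move=> /andP[g0 g1] hu.
apply: (@series_le_cvg _ _ (geometric 1 g)).
- by move=> n; rewrite mulr_ge0 ?exprn_ge0 // (andP (hu n)).1.
- by move=> n; rewrite /= mul1r exprn_ge0.
- move=> n; rewrite /= mul1r -[leRHS]mulr1 ler_wpM2l ?exprn_ge0 //.
  exact: (andP (hu n)).2.
- by apply: is_cvg_geometric_series; rewrite ger0_norm.
Qed.

Lemma lim_scale (c : R) (u : nat -> R) : cvgn (series u) ->
  limn (series (fun t => c * u t)) = c * limn (series u).
Proof.
move=> cu; have -> : (fun t => c * u t) = c *: u by apply/funext.
by rewrite lim_seriesZ.
Qed.

Lemma lim_sum (I : finType) (u : I -> nat -> R) :
  (forall i, cvgn (series (u i))) ->
  cvgn (series (fun t => \sum_i u i t)) /\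
  limn (series (fun t => \sum_i u i t)) = \sum_i limn (series (u i)).
Proof.
move=> hc.
suff H : forall r, cvgn (series (fun t => \sum_(i <- r) u i t)) /\
  limn (series (fun t => \sum_(i <- r) u i t)) = \sum_(i <- r) limn (series (u i)).
  exact: H.
elim => [|i r [IHc IHl]].
  have -> : (fun t => \sum_(i <- [::]) u i t) = (fun=> 0).
    by apply/funext => t; rewrite big_nil.
  have -> : series (fun=> (0 : R)) = (fun=> 0).
    by apply/funext => n; rewrite /series /= big1.
  by rewrite big_nil; split; [exact: is_cvg_cst | exact: lim_cst].
have -> : (fun t => \sum_(j <- i :: r) u j t) = u i + (fun t => \sum_(j <- r) u j t).
  by apply/funext => t; rewrite big_cons.
split; first exact: is_cvg_seriesD.
by rewrite lim_seriesD // big_cons IHl.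
Qed.

Lemma lim_ge (u : nat -> R) t : (forall n, 0 <= u n) -> cvgn (series u) ->
  u t <= limn (series u).
Proof.
move=> u0 cu.
have nd : nondecreasing_seq (series u).
  by apply: nondecreasing_series => n _ _; exact: u0.
apply: le_trans (nondecreasing_cvgn_le nd cu t.+1).
rewrite /series /= big_nat_recr //= lerDr sumr_ge0 //.
Qed.

End Ana.

Section Key.
Variables (R : realType) (S A : finType) (E : env R S A) (g : R).
Hypothesis (g0 : 0 < g) (g1 : g < 1).
Implicit Types (p q : policy R S A).

Let g01 : 0 <= g < 1. Proof. by rewrite ltW. Qed.

Definition Dp p s := limn (series (fun t => g ^+ t * Qp E p t s)).

Lemma cvgD p s : cvgn (series (fun t => g ^+ t * Qp E p t s)).
Proof. by apply: cvg_gu; [exact: g01 | move=> t; exact: Qp_bounds]. Qed.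

Lemma Jind p (e : S * A) :
  Jret E g (fun s a s' => (e == (s, a))%:R) p = sval p e.1 e.2 * Dp p e.1.
Proof.
rewrite /Jret /Dp -lim_scale; last exact: cvgD.
congr (limn (series _)); apply/funext => t.
rewrite mulrCA; congr (_ * _).
case: e => x y /=.
rewrite (bigD1 x) //= [X in _ + X]big1 ?addr0; last first.
  move=> s0 s0x; apply: big1 => a _; apply: big1 => s' _.
  by rewrite xpair_eqE eq_sym (negbTE s0x) mulr0.
rewrite (bigD1 y) //= [X in _ + X]big1 ?addr0; last first.
  move=> a ay; apply: big1 => s' _.
  by rewrite xpair_eqE eqxx eq_sym (negbTE ay) mulr0.
under eq_bigr do rewrite xpair_eqE !eqxx mulr1.
by rewrite step_sum mulrC.
Qed.

Lemma key p q :
  (forall e : S * A, sval p e.1 e.2 * Dp p e.1 = sval q e.1 e.2 * Dp q e.1) ->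
  traj_lottery E p = traj_lottery E q.
Proof.
move=> h.
have hD : forall s, Dp p s = Dp q s.
  move=> s.
  rewrite -[Dp p s]mul1r -(proj2 (svalP p s)) -[Dp q s]mul1r.
  rewrite -(proj2 (svalP q s)) !mulr_suml.
  by apply: eq_bigr => a _; exact: (h (s, a)).
have hpi : forall s a, Dp p s != 0 -> sval p s a = sval q s a.
  move=> s a nz; apply: (mulIf nz); rewrite (h (s, a)) /=.
  by rewrite hD.
have hDge : forall k (ss : {ffun 'I_k.+1 -> S}) aa,
    g ^+ k * traj_prob E p ss aa <= Dp p (ss ord_max).
  move=> k ss aa.
  have nn : forall n, 0 <= g ^+ n * Qp E p n (ss ord_max).
    by move=> n; apply: mulr_ge0; [exact: exprn_ge0 (ltW g0) | exact: (andP (Qp_bounds E p n _)).1].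
  apply: le_trans (lim_ge k nn (@cvgD p _)).
  by apply: ler_wpM2l; [exact: exprn_ge0 (ltW g0) | exact: Qp_ge].
have main : forall k (ss : {ffun 'I_k.+1 -> S}) aa,
    traj_prob E p ss aa = traj_prob E q ss aa.
  elim => [|k IH] ss aa; first by rewrite /traj_prob !big_ord0.
  rewrite -(snoc_finit ss) -(snoc_finit aa) !traj_snoc IH.
  set c := traj_prob E q _ _.
  have [->|cnz] := eqVneq c 0; first by rewrite !mul0r.
  have cpos : 0 < c by rewrite lt_def cnz traj_ge0.
  rewrite hpi //; apply/lt0r_neq0.
  apply: lt_le_trans (hDge _ _ (finit aa)).
  by rewrite IH -/c mulr_gt0 // exprn_gt0.
apply: functional_extensionality_dep => k.
apply/funext => ss; apply/funext => aa; exact: main.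
Qed.

End Key.

Lemma cvg_scale (R : realType) (c : R) (u : nat -> R) : cvgn (series u) ->
  cvgn (series (fun t => c * u t)).
Proof.
move=> cu; have -> : (fun t => c * u t) = c *: u by apply/funext.
exact: is_cvg_seriesZ.
Qed.

Lemma Jret_occ (R : realType) (S A : finType) (E : env R S A) (g : R)
    (Rw : S -> A -> S -> R) (p : policy R S A) : 0 <= g < 1 ->
  Jret E g Rw p = \sum_s \sum_a \sum_s' occupancy E g p s a s' * Rw s a s'.
Proof.
move=> hg; rewrite /Jret.
have -> : (fun t => g ^+ t * \sum_s \sum_a \sum_s' step_prob E p t s a s' * Rw s a s') =
   (fun t => \sum_s \sum_a \sum_s' Rw s a s' * (g ^+ t * step_prob E p t s a s')).
  apply/funext => t; rewrite mulr_sumr; apply: eq_bigr => s _.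
  rewrite mulr_sumr; apply: eq_bigr => a _.
  rewrite mulr_sumr; apply: eq_bigr => s' _.
  by rewrite [RHS]mulrC mulrA.
have c3 : forall s a s', cvgn (series (fun t => Rw s a s' * (g ^+ t * step_prob E p t s a s'))).
  move=> s a s'; apply: cvg_scale; apply: cvg_gu => // t; exact: step_bounds.
have c2 : forall s a, cvgn (series (fun t => \sum_s' Rw s a s' * (g ^+ t * step_prob E p t s a s'))).
  by move=> s a; exact: (@lim_sum R S (fun s' t => Rw s a s' * (g ^+ t * step_prob E p t s a s')) (c3 s a)).1.
have c1 : forall s, cvgn (series (fun t => \sum_a \sum_s' Rw s a s' * (g ^+ t * step_prob E p t s a s'))).
  by move=> s; exact: (@lim_sum R A (fun a t => \sum_s' Rw s a s' * (g ^+ t * step_prob E p t s a s')) (c2 s)).1.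
apply: (eq_trans (@lim_sum R S (fun s t => \sum_a \sum_s' Rw s a s' * (g ^+ t * step_prob E p t s a s')) c1).2); apply: eq_bigr => s _.
apply: (eq_trans (@lim_sum R A (fun a t => \sum_s' Rw s a s' * (g ^+ t * step_prob E p t s a s')) (c2 s)).2); apply: eq_bigr => a _.
apply: (eq_trans (@lim_sum R S (fun s' t => Rw s a s' * (g ^+ t * step_prob E p t s a s')) (c3 s a)).2); apply: eq_bigr => s' _.
have cs : cvgn (series (fun t => g ^+ t * step_prob E p t s a s')).
  by apply: cvg_gu => // t; exact: step_bounds.
apply: (eq_trans (lim_scale (Rw s a s') cs)); exact: mulrC.
Qed.

Local Open Scope classical_set_scope.
Theorem theorem3 (R : realType) (S A : finType) (E : env R S A)
    (HS : (0 < #|S|)%N) (HA : (0 < #|A|)%N) :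
  Ord_GOMORL E = Ord_OMO E /\ Ord_OMO E = Ord_TLO E.
Proof.
have i1 : Ord_GOMORL E `<=` Ord_OMO E.
  move=> Rel [k [Rw [g [leJ [hg [[tot trans] hR]]]]]].
  pose F (m : S -> A -> S -> R) : 'I_k -> R :=
    fun i => \sum_s \sum_a \sum_s' m s a s' * Rw s a s' i.
  have hJ : forall p, Jvec E g Rw p = F (occupancy E g p).
    by move=> p; apply/funext => i; exact: Jret_occ.
  exists g, (fun m1 m2 => leJ (F m1) (F m2)); split => //; split.
    split; first by move=> x y _ _; exact: tot.
    by move=> x y z _ _ _; exact: trans.
  by move=> p q; rewrite hR !hJ.
have i2 : Ord_OMO E `<=` Ord_TLO E.
  move=> Rel [g [lem [hg [[tot trans] hR]]]].
  pose G (L : lottery R S A) : S -> A -> S -> R := fun s a s' =>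
    limn (series (fun t => g ^+ t *
      \sum_(ss : {ffun 'I_t.+2 -> S})
       \sum_(aa : {ffun 'I_t.+1 -> A}
          | [&& ss (inord t) == s, aa (inord t) == a & ss (inord t.+1) == s'])
         L t.+1 ss aa)).
  have hG : forall p, G (traj_lottery E p) = occupancy E g p by [].
  exists (fun L1 L2 => lem (G L1) (G L2)); split; last first.
    by move=> p q; rewrite hR !hG.
  split.
    move=> _ _ [p _ <-] [q _ <-]; rewrite !hG; apply: tot; by exists p + exists q.
  move=> _ _ _ [p _ <-] [q _ <-] [r _ <-]; rewrite !hG; apply: trans.
  - by exists p.
  - by exists q.
  - by exists r.
have i3 : Ord_TLO E `<=` Ord_GOMORL E.
  move=> Rel [leL [[tot trans] hR]].
  have [a0 _] := card_gt0P HA.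
  have d0 : forall s : S, is_dist (fun a : A => ((a == a0)%:R : R)).
    move=> s; split; first by move=> a; rewrite ler0n.
    rewrite (bigD1 a0) //= eqxx big1 ?addr0 // => a.
    by move/negbTE => ->.
  pose p0 : policy R S A := exist _ (fun s (a : A) => ((a == a0)%:R : R)) d0.
  pose k := #|{: S * A}|.
  pose Rw (s : S) (a : A) (s' : S) (i : 'I_k) : R := ((enum_val i : S * A) == (s, a))%:R.
  pose g : R := 2^-1.
  have g0 : 0 < g by rewrite invr_gt0.
  have g1 : g < 1 by rewrite invf_lt1 // ltr1n.
  have hJ : forall p (i : 'I_k), Jvec E g Rw p i =
      sval p (enum_val i).1 (enum_val i).2 * Dp E g p (enum_val i).1.
    move=> p i; exact: Jind.
  have hinj : forall p q, Jvec E g Rw p = Jvec E g Rw q ->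
      traj_lottery E p = traj_lottery E q.
    move=> p q h; apply: (key g0 g1) => e.
    have := congr1 (fun f => f (enum_rank e)) h.
    by rewrite /= !hJ enum_rankK.
  pose Phi (v : 'I_k -> R) : lottery R S A :=
    match pselect (exists p, Jvec E g Rw p = v) with
    | left H => traj_lottery E (proj1_sig (cid H))
    | right _ => traj_lottery E p0 end.
  have hPhi : forall p, Phi (Jvec E g Rw p) = traj_lottery E p.
    move=> p; rewrite /Phi; case: pselect => [H|nH].
      by apply: hinj; exact: (proj2_sig (cid H)).
    by exfalso; apply: nH; exists p.
  have hrange : forall v, range (traj_lottery E) (Phi v).
    by move=> v; rewrite /Phi; case: pselect => [H|nH]; eexists.
  exists k, Rw, g, (fun v w => leL (Phi v) (Phi w)); split.
    by rewrite (ltW g0) g1.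
  split; last by move=> p q; rewrite hR !hPhi.
  split; first by move=> x y _ _; apply: tot.
  by move=> x y z _ _ _; apply: trans.
split; apply/seteqP; split => //.
- by move=> x /i2 /i3.
- by move=> x /i3 /i1.
Qed.
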